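(* Let $p_1,p_2$ be non-negative integers with $p_1+p_2$ odd. Then $$\sum_{j_1=0}^{p_1}\sum_{j_2=0}^{p_2}\binom{p_1}{j_1}\binom{p_2}{j_2}(-1)^{j_1+j_2}B_{p_1-j_1}B_{p_2-j_2}B_{j_1+j_2}=0,$$ where $B_j$ are the Bernoulli numbers.
   Context: The Bernoulli numbers $B_j$ are defined by $\frac{t}{e^t-1}=\sum_{j\ge0}B_j\frac{t^j}{j!}$ (so $B_1=-1/2$). *)

(* Defs.v *)
From mathcomp Require Import all_boot all_order all_algebra.
Set Implicit Arguments. Unset Strict Implicit. Unset Printing Implicit Defensive.
Import Order.TTheory GRing.Theory Num.Theory.
Local Open Scope ring_scope.

(* Bernoulli numbers (rational), convention B_1 = -1/2, i.e. the
   coefficients of t/(e^t - 1) = sum_j B_j t^j / j!.  Comparing coefficients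
   of t^(n+1) in (e^t - 1) * sum_j B_j t^j/j! = t gives B_0 = 1 and, for n >= 1,
   sum_{k=0}^{n} C(n+1,k) B_k = 0, i.e.
   B_n = - 1/(n+1) * sum_{k<n} C(n+1,k) B_k.
   bern_seq n is the list [B_0; ...; B_n]. *)
Fixpoint bern_seq (n : nat) : seq rat :=
  match n with
  | 0 => [:: 1]
  | m.+1 =>
      let s := bern_seq m in
      rcons s (- (m.+2%:R)^-1 * \sum_(k < m.+1) ('C(m.+2, k))%:R * s`_k)
  end.

Definition bernoulli (n : nat) : rat := (bern_seq n)`_n.

Lemma bernoulli0 : bernoulli 0 = 1. Proof. by []. Qed.

(* Main.v *)
Require Import Defs.
From mathcomp Require Import all_boot all_order all_algebra.
From mathcomp Require Import ring.
Import GRing.Theory Num.Theory.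
Local Open Scope ring_scope.

Lemma size_bern_seq n : @size rat (bern_seq n) = n.+1.
Proof. by elim: n => //= n IH; rewrite size_rcons IH. Qed.

Lemma bern_seq_nth n k : (k <= n)%N -> (bern_seq n)`_k = bernoulli k.
Proof.
elim: n k => [|n IH] k hk; first by move: hk; rewrite leqn0 => /eqP->.
rewrite /= nth_rcons size_bern_seq.
case: ltnP => hkn; first by rewrite IH.
have -> : k = n.+1 by apply/eqP; rewrite eqn_leq hk hkn.
by rewrite eqxx /bernoulli /= nth_rcons size_bern_seq ltnn eqxx.
Qed.

Lemma bernS m : bernoulli m.+1 =
  - (m.+2%:R)^-1 * \sum_(k < m.+1) ('C(m.+2, k))%:R * bernoulli k.
Proof.
rewrite /bernoulli [bern_seq m.+1]/= nth_rcons size_bern_seq ltnn eqxx.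
congr (_ * _); apply: eq_bigr => i _.
by rewrite -/(bernoulli i) bern_seq_nth // -ltnS.
Qed.

Lemma bern_rec m : \sum_(k < m.+2) ('C(m.+2, k))%:R * bernoulli k = 0 :> rat.
Proof.
rewrite big_ord_recr /= binSn bernS.
have h : (m.+2)%:R != 0 :> rat by rewrite pnatr_eq0.
set S := \sum_(i < m.+1) _.
by rewrite mulNr mulrN mulrA mulrV // mul1r subrr.
Qed.

Definition fr n : rat := (n`!)%:R.
Lemma fr_neq0 n : fr n != 0. Proof. by rewrite /fr pnatr_eq0 -lt0n fact_gt0. Qed.

Lemma invff n k : (k <= n)%N -> (fr k)^-1 * (fr (n - k)%N)^-1 = ('C(n, k))%:R / fr n.
Proof.
move=> hk; have := bin_fact hk => /(congr1 (fun z => z%:R : rat)).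
rewrite !natrM -/(fr _) -/(fr _) -/(fr _) => E.
have h1 := fr_neq0 k; have h2 := fr_neq0 (n - k)%N; have h3 := fr_neq0 n.
rewrite -E; field; by rewrite !pnatr_eq0 -!lt0n !fact_gt0 bin_gt0 hk.
Qed.

Definition bb n : rat := bernoulli n / fr n.
Definition sg n : rat := (-1) ^+ n.
Definition bbm n : rat := sg n * bb n.
Definition ee n : rat := (fr n)^-1.
Definition eem n : rat := sg n * ee n.
Definition EE n : rat := (fr n.+1)^-1.
Definition EEm n : rat := sg n * EE n.

Lemma sgD m n : sg (m + n) = sg m * sg n. Proof. by rewrite /sg exprD. Qed.
Lemma sg_split n k : (k <= n)%N -> sg n = sg k * sg (n - k)%N.
Proof. by move=> h; rewrite -sgD subnKC. Qed.

Lemma U1c n : \sum_(k < n.+1) bb k * EE (n - k)%N = (n == 0)%:R.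
Proof.
case: n => [|m]; first by rewrite big_ord1 /bb /EE /fr /= bernoulli0 !mulr1n divr1 invr1 mulr1.
rewrite /=.
transitivity ((fr m.+2)^-1 * \sum_(k < m.+2) ('C(m.+2, k))%:R * bernoulli k); last first.
  by rewrite bern_rec mulr0.
rewrite mulr_sumr; apply: eq_bigr => k _.
have hk : (k <= m.+2)%N by apply: ltnW; exact: ltn_ord k.
rewrite /bb /EE -subSn; last by rewrite -ltnS ltn_ord.
by rewrite -mulrA invff // mulrA mulrC mulrA -mulrA (mulrC (bernoulli k)).
Qed.

Lemma U1mc n : \sum_(k < n.+1) bbm k * EEm (n - k)%N = (n == 0)%:R.
Proof.
transitivity (sg n * \sum_(k < n.+1) bb k * EE (n - k)%N).
  rewrite mulr_sumr; apply: eq_bigr => k _.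
  rewrite /bbm /EEm (@sg_split n k); last by rewrite -ltnS ltn_ord.
  by rewrite mulrACA.
by rewrite U1c; case: n => [|n]; rewrite ?mulr0 // mulr1.
Qed.

Lemma U3c n : \sum_(k < n.+1) ee k * eem (n - k)%N = (n == 0)%:R.
Proof.
have S : \sum_(k < n.+1) sg (n - k)%N * ('C(n, k))%:R = ((-1) + 1) ^+ n :> rat.
  rewrite exprDn; apply: eq_bigr => k _.
  by rewrite expr1n mulr1 mulr_natr.
transitivity ((fr n)^-1 * \sum_(k < n.+1) sg (n - k)%N * ('C(n, k))%:R).
  rewrite mulr_sumr; apply: eq_bigr => k _.
  have hk : (k <= n)%N by rewrite -ltnS ltn_ord.
  rewrite /ee /eem mulrCA invff //; ring.
rewrite S addNr expr0n; case: n {S} => [|n] /=; last by rewrite mulr0.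
by rewrite /fr /= invr1 mulr1.
Qed.

Lemma U4c n : \sum_(k < n.+1) eem k * EE (n - k)%N = EEm n.
Proof.
have : \sum_(k < n.+2) sg k * ('C(n.+1, k))%:R = (1 + (-1)) ^+ n.+1 :> rat.
  rewrite exprDn; apply: eq_bigr => k _.
  by rewrite expr1n mul1r mulr_natr.
rewrite big_ord_recr /= binn subrr expr0n /= mulr1 => /eqP.
rewrite addr_eq0 => /eqP S.
transitivity ((fr n.+1)^-1 * \sum_(k < n.+1) sg k * ('C(n.+1, k))%:R).
  rewrite mulr_sumr; apply: eq_bigr => k _.
  have hk : (k <= n.+1)%N by apply: ltnW; exact: ltn_ord k.
  rewrite /EE /eem -subSn; last by rewrite -ltnS ltn_ord.
  rewrite -mulrA invff //; ring.
rewrite S /EEm /EE /sg exprS; ring.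
Qed.

Section Trunc.
Variable N : nat.

Definition P (a : nat -> rat) : {poly rat} := \poly_(i < N) a i.
Definition lz1 (p : {poly rat}) := forall i, (i < N)%N -> p`_i = 0.

Lemma lz1D p q : lz1 p -> lz1 q -> lz1 (p + q).
Proof. by move=> hp hq i hi; rewrite coefD hp ?hq ?addr0. Qed.
Lemma lz1N p : lz1 p -> lz1 (- p).
Proof. by move=> hp i hi; rewrite coefN hp ?oppr0. Qed.
Lemma lz1B p q : lz1 p -> lz1 q -> lz1 (p - q).
Proof. by move=> hp hq; apply: lz1D => //; exact: lz1N. Qed.
Lemma lz1Ml p q : lz1 p -> lz1 (p * q).
Proof.
move=> hp i hi; rewrite coefM big1 // => j _.
rewrite hp ?mul0r //; apply: leq_ltn_trans hi; by rewrite -ltnS ltn_ord.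
Qed.
Lemma lz1Mr p q : lz1 q -> lz1 (p * q).
Proof. by move=> hq; rewrite mulrC; exact: lz1Ml. Qed.

Lemma PM a b n : (n < N)%N -> (P a * P b)`_n = \sum_(k < n.+1) a k * b (n - k)%N.
Proof.
move=> hn; rewrite coefM; apply: eq_bigr => k _.
have hk : (k < N)%N by apply: leq_ltn_trans hn; rewrite -ltnS ltn_ord.
by rewrite !coef_poly hk (leq_ltn_trans (leq_subr _ _) hn).
Qed.

Lemma lz1_coef (p q : {poly rat}) : (forall n, (n < N)%N -> p`_n = q`_n) -> lz1 (p - q).
Proof. by move=> h n hn; rewrite coefB h // subrr. Qed.

Lemma U1 : lz1 (P bb * P EE - 1).
Proof. apply: lz1_coef => n hn; by rewrite PM // U1c coef1. Qed.
Lemma U1m : lz1 (P bbm * P EEm - 1).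
Proof. apply: lz1_coef => n hn; by rewrite PM // U1mc coef1. Qed.
Lemma U3 : lz1 (P ee * P eem - 1).
Proof. apply: lz1_coef => n hn; by rewrite PM // U3c coef1. Qed.
Lemma U4 : lz1 (P eem * P EE - P EEm).
Proof. apply: lz1_coef => n hn; by rewrite PM // U4c coef_poly hn. Qed.

Lemma Key : lz1 (P bbm - P ee * P bb).
Proof.
set D := P bbm - P ee * P bb.
have E1 : D * P EEm = (P bbm * P EEm - 1) - P ee * P bb * (P EEm - P eem * P EE)
   - (P ee * P eem - 1) * (P bb * P EE) - (P bb * P EE - 1).
  rewrite /D; ring.
have L1 : lz1 (D * P EEm).
  rewrite E1; apply: lz1B; last exact: U1.
  apply: lz1B; last exact: lz1Ml U3.
  apply: lz1B; first exact: U1m.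
  apply: lz1Mr; rewrite -[_ - _]opprB; apply: lz1N; exact: U4.
have -> : D = - (D * (P bbm * P EEm - 1)) + (D * P EEm) * P bbm by ring.
apply: lz1D; first by apply: lz1N; apply: lz1Mr; exact: U1m.
exact: lz1Ml.
Qed.

End Trunc.

From mathcomp Require Import zify.

Notation R2 := {poly {poly rat}}.
Definition xx : R2 := ('X : {poly rat})%:P.
Definition yy : R2 := 'X.
Definition lz2 k (f : R2) := forall i j, (i + j < k)%N -> f`_j`_i = 0.

Lemma lz2D k f g : lz2 k f -> lz2 k g -> lz2 k (f + g).
Proof. by move=> hf hg i j h; rewrite !coefD hf ?hg ?addr0. Qed.
Lemma lz2N k f : lz2 k f -> lz2 k (- f).
Proof. by move=> hf i j h; rewrite !coefN hf ?oppr0. Qed.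
Lemma lz2B k f g : lz2 k f -> lz2 k g -> lz2 k (f - g).
Proof. by move=> hf hg; apply: lz2D => //; exact: lz2N. Qed.
Lemma lz2_0 f : lz2 0 f. Proof. by []. Qed.
Lemma lz2W k k' f : (k' <= k)%N -> lz2 k f -> lz2 k' f.
Proof. by move=> hk hf i j h; apply: hf; apply: leq_trans hk. Qed.

Lemma lz2M a b f g : lz2 a f -> lz2 b g -> lz2 (a + b) (f * g).
Proof.
move=> hf hg i j h; rewrite coefM coef_sum big1 // => j' _.
rewrite coefM big1 // => i' _.
have hj : (j' <= j)%N by rewrite -ltnS ltn_ord.
have hi : (i' <= i)%N by rewrite -ltnS ltn_ord.
case: (ltnP (i' + j') a) => ha; first by rewrite hf ?mul0r.
by rewrite hg ?mulr0 //; lia.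
Qed.
Lemma lz2Ml k f g : lz2 k f -> lz2 k (f * g).
Proof. by move=> hf; rewrite -[k]addn0; apply: lz2M. Qed.
Lemma lz2Mr k f g : lz2 k g -> lz2 k (f * g).
Proof. by move=> hg; rewrite mulrC; exact: lz2Ml. Qed.

Lemma lz2X k u : lz2 1 u -> lz2 k (u ^+ k).
Proof.
move=> hu; elim: k => [|k IH]; first exact: lz2_0.
by rewrite exprS -add1n; apply: lz2M.
Qed.

Lemma lz2_xx : lz2 1 xx.
Proof. by move=> [|i] [|j] //= _; rewrite coefC /= coefX. Qed.
Lemma lz2_yy : lz2 1 yy.
Proof. by move=> [|i] [|j] //= _; rewrite coefX /= coef0. Qed.

Definition sig (u : R2) (p : {poly rat}) : R2 := (map_poly (polyC \o polyC) p).[u].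

Lemma sigM u p q : sig u (p * q) = sig u p * sig u q.
Proof. by rewrite /sig rmorphM hornerM. Qed.
Lemma sigB u p q : sig u (p - q) = sig u p - sig u q.
Proof. by rewrite /sig rmorphB hornerD hornerN. Qed.

Lemma lz_sig N u p : lz2 1 u -> lz1 N p -> lz2 N (sig u p).
Proof.
move=> hu hp; rewrite /sig horner_coef.
apply: (big_ind (lz2 N)); [by move=> i j _; rewrite !coef0 | exact: lz2D |].
move=> i _; rewrite coef_map /=.
case: (ltnP i N) => hi; first by rewrite hp // !polyC0 mul0r => ? ? _; rewrite !coef0.
exact: (lz2Mr _ _ _ (lz2W _ _ _ hi (lz2X i u hu))).
Qed.

Lemma sigP N u a : sig u (P N a) = \sum_(i < N) (a i)%:P%:P * u ^+ i.
Proof.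
rewrite /sig.
have -> : map_poly (polyC \o polyC) (P N a) = \poly_(i < N) ((a i)%:P%:P : R2).
  apply/polyP => i.
  by rewrite coef_map !coef_poly; case: ifP => //= _; rewrite !polyC0.
by rewrite horner_poly.
Qed.

Lemma sig_xx N a : sig xx (P N a) = (P N a)%:P.
Proof.
rewrite sigP /P poly_def rmorph_sum; apply: eq_bigr => i _.
by rewrite /xx -rmorphXn -rmorphM mul_polyC.
Qed.
Lemma sig_yy N a : sig yy (P N a) = \poly_(i < N) (a i)%:P.
Proof. by rewrite sigP poly_def; apply: eq_bigr => i _; rewrite mul_polyC. Qed.

Lemma C1 N a c i j : (i < N)%N -> (j < N)%N ->
  (sig xx (P N a) * sig yy (P N c))`_j`_i = a i * c j.
Proof.
move=> hi hj; rewrite sig_xx sig_yy coefCM coef_poly hj coefMC /P coef_poly hi.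
by [].
Qed.

Lemma XY n i j : ((xx + yy) ^+ n)`_j`_i = if (i + j == n)%N then ('C(n, j))%:R else 0.
Proof.
rewrite exprDn coef_sum coef_sum.
have T : forall k : 'I_n.+1, ((xx ^+ (n - k) * yy ^+ k) *+ 'C(n, k))`_j`_i
     = if (k == j :> nat) && (i == n - k)%N then ('C(n, k))%:R else 0.
  move=> k; rewrite coefMn coefMn /xx /yy -rmorphXn coefCM coefXn (eq_sym j).
  case: (k == j :> nat); last by rewrite /= mulr0 coef0 mul0rn.
  rewrite /= mulr1 coefXn; case: (i == n - k)%N => //=; by rewrite mul0rn.
rewrite (eq_bigr _ (fun k _ => T k)).
case: (ltnP n j) => hnj.
  rewrite big1; last by move=> k _; rewrite (_ : (k == j :> nat) = false) //; apply/negbTE; rewrite neq_ltn; apply/orP; left; apply: leq_trans hnj; rewrite ltn_ord.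
  by case: eqP => // h; lia.
have hj : (j < n.+1)%N by [].
rewrite (bigD1 (Ordinal hj)) //= eqxx /= big1 ?addr0; last first.
  move=> k hk; rewrite (_ : (k == j :> nat) = false) //.
  by apply/negbTE; apply: contra hk => /eqP hk; apply/eqP; apply: val_inj.
have -> : (i + j == n)%N = (i == n - j)%N by apply/eqP/eqP; lia.
by [].
Qed.

Lemma C2 N c i j : (i + j < N)%N ->
  (sig (xx + yy) (P N c))`_j`_i = c (i + j)%N * ('C(i + j, j))%:R.
Proof.
move=> hij; rewrite sigP coef_sum coef_sum.
under eq_bigr => n _ do rewrite coefCM coefCM XY.
rewrite (bigD1 (Ordinal hij)) //= eqxx big1 ?addr0 // => k hk.
rewrite (_ : (i + j == k)%N = false) ?mulr0 //.
by apply/negbTE; apply: contra hk => /eqP hk; apply/eqP; apply: val_inj.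
Qed.

Lemma Cfin N c a p1 p2 : (p1 + p2 < N)%N ->
  (sig (xx + yy) (P N c) * (sig xx (P N a) * sig yy (P N a)))`_p2`_p1
  = \sum_(j2 < p2.+1) \sum_(j1 < p1.+1)
      c (j1 + j2)%N * ('C(j1 + j2, j2))%:R * (a (p1 - j1)%N * a (p2 - j2)%N).
Proof.
move=> h; rewrite coefM coef_sum; apply: eq_bigr => j2 _.
rewrite (coefM _ _ p1); apply: eq_bigr => j1 _.
have h1 : (j1 <= p1)%N by rewrite -ltnS ltn_ord.
have h2 : (j2 <= p2)%N by rewrite -ltnS ltn_ord.
rewrite C2; last by lia.
rewrite C1 //; lia.
Qed.

From mathcomp Require Import lra.

Lemma sg2 n : sg n * sg n = 1.
Proof. by rewrite /sg -exprMn mulrNN mulr1 expr1n. Qed.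

Lemma lz2_1 : lz2 1 (xx + yy).
Proof. apply: lz2D; [exact: lz2_xx | exact: lz2_yy]. Qed.

Lemma KeyU N u : lz2 1 u ->
  lz2 N (sig u (P N bbm) - sig u (P N ee) * sig u (P N bb)).
Proof. by move=> hu; rewrite -sigM -sigB; apply: lz_sig => //; exact: Key. Qed.

Lemma EXP N : lz2 N (sig (xx + yy) (P N ee) - sig xx (P N ee) * sig yy (P N ee)).
Proof.
move=> i j h; rewrite coefB coefB C2 // C1; try lia.
have hj : (j <= i + j)%N by apply: leq_addl.
have := invff _ _ hj; rewrite addnK => E.
by rewrite /ee mulrC -E mulrC subrr.
Qed.

Definition G (c a : nat -> rat) p1 p2 := \sum_(j2 < p2.+1) \sum_(j1 < p1.+1)
      c (j1 + j2)%N * ('C(j1 + j2, j2))%:R * (a (p1 - j1)%N * a (p2 - j2)%N).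

Lemma Gsign p1 p2 : G bb bbm p1 p2 = sg (p1 + p2) * G bbm bb p1 p2.
Proof.
rewrite /G mulr_sumr; apply: eq_bigr => j2 _; rewrite mulr_sumr; apply: eq_bigr => j1 _.
have h1 : (j1 <= p1)%N by rewrite -ltnS ltn_ord.
have h2 : (j2 <= p2)%N by rewrite -ltnS ltn_ord.
have -> : (p1 + p2 = (p1 - j1) + (p2 - j2) + (j1 + j2))%N by lia.
rewrite /bbm sgD (sgD (p1 - j1)%N).
have := sg2 (j1 + j2)%N.
move: (sg (j1 + j2)%N) (sg (p1 - j1)%N) (sg (p2 - j2)%N) => a b c ha.
transitivity (b * c * (a * a) * (bb (j1 + j2) * 'C(j1 + j2, j2)%:R * (bb (p1 - j1) * bb (p2 - j2)))).
  by rewrite ha mulr1; ring.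
ring.
Qed.

Lemma finalEq p1 p2 :
  \sum_(j1 < p1.+1) \sum_(j2 < p2.+1)
    ('C(p1, j1))%:R * ('C(p2, j2))%:R * (-1) ^+ (j1 + j2)
    * bernoulli (p1 - j1) * bernoulli (p2 - j2) * bernoulli (j1 + j2)
  = fr p1 * fr p2 * G bbm bb p1 p2 :> rat.
Proof.
rewrite /G exchange_big mulr_sumr; apply: eq_bigr => j2 _.
rewrite mulr_sumr; apply: eq_bigr => j1 _.
have h1 : (j1 <= p1)%N by rewrite -ltnS ltn_ord.
have h2 : (j2 <= p2)%N by rewrite -ltnS ltn_ord.
have h3 : (j2 <= j1 + j2)%N by apply: leq_addl.
have E1 := invff _ _ h1; have E2 := invff _ _ h2; have E3 := invff _ _ h3.
rewrite addnK in E3.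
have F1 := fr_neq0 p1; have F2 := fr_neq0 p2; have F3 := fr_neq0 (j1 + j2)%N.
have C1' : ('C(p1, j1))%:R = fr p1 * ((fr j1)^-1 * (fr (p1 - j1)%N)^-1).
  by rewrite E1 mulrC divfK.
have C2' : ('C(p2, j2))%:R = fr p2 * ((fr j2)^-1 * (fr (p2 - j2)%N)^-1).
  by rewrite E2 mulrC divfK.
have C3' : ('C(j1 + j2, j2))%:R = fr (j1 + j2)%N * ((fr j2)^-1 * (fr j1)^-1).
  by rewrite E3 mulrC divfK.
rewrite C1' C2' C3' /bbm /bb /sg.
move: F1 F2 F3; move: (fr p1) (fr p2) (fr (j1 + j2)%N) => a b c Fa Fb Fc.
field; by rewrite Fc !pnatr_eq0 -!lt0n !fact_gt0.
Qed.

Theorem mainTheorem11 (p1 p2 : nat) : odd (p1 + p2) ->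
  \sum_(j1 < p1.+1) \sum_(j2 < p2.+1)
    ('C(p1, j1))%:R * ('C(p2, j2))%:R * (-1) ^+ (j1 + j2)
    * bernoulli (p1 - j1) * bernoulli (p2 - j2) * bernoulli (j1 + j2) = 0 :> rat.
Proof.
move=> hodd; rewrite finalEq.
set N := (p1 + p2).+1.
have hN : (p1 + p2 < N)%N by [].
have KX := KeyU N xx lz2_xx.
have KY := KeyU N yy lz2_yy.
have KZ := KeyU N (xx + yy) lz2_1.
have EX := EXP N.
set Xb := sig xx (P N bb) in KX *; set Xm := sig xx (P N bbm) in KX *;
set Xe := sig xx (P N ee) in KX EX *.
set Yb := sig yy (P N bb) in KY *; set Ym := sig yy (P N bbm) in KY *;
set Ye := sig yy (P N ee) in KY EX *.
set Zb := sig (xx + yy) (P N bb) in KZ *; set Zm := sig (xx + yy) (P N bbm) in KZ *;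
set Ze := sig (xx + yy) (P N ee) in KZ EX *.
have HF : lz2 N (Zm * (Xb * Yb) - Zb * (Xm * Ym)).
  have -> : Zm * (Xb * Yb) - Zb * (Xm * Ym) =
    (Zm - Ze * Zb) * (Xb * Yb) + (Ze - Xe * Ye) * (Zb * Xb * Yb)
    - Zb * ((Xm - Xe * Xb) * Ym + Xe * Xb * (Ym - Ye * Yb)) by ring.
  apply: lz2B; first apply: lz2D.
  - exact: (lz2Ml _ _ _ KZ).
  - exact: (lz2Ml _ _ _ EX).
  - apply: (lz2Mr _ _ _ (lz2D _ _ _ (lz2Ml _ _ _ KX) (lz2Mr _ _ _ KY))).
have := HF p1 p2 hN; rewrite coefB coefB /Zm /Xb /Yb /Zb /Xm /Ym.
rewrite !Cfin // -/(G bbm bb p1 p2) -/(G bb bbm p1 p2) Gsign.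
have -> : sg (p1 + p2) = -1 by rewrite /sg -signr_odd hodd expr1.
move=> h; have : G bbm bb p1 p2 = 0 by lra.
by move=> ->; rewrite mulr0.
Qed.
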